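(* Let $G=(\mathcal{V},\mathcal{E})$ be a hypergraph, $P$ a pmf on $\mathcal{V}$, and $L\ge1$ an integer. Then: (i) for all $\ell\in[L+1]$, $0\le\theta^{(\ell)}_{L+1}(G,P)\le I_{L+1}(G,P)$; (ii) $0\le I_{L+1}(G,P)\le H_{L+1}(P)$; moreover $I_{L+1}(G,P)=0$ if and only if no $e\subseteq\mathrm{supp}(P)$ with $2\le|e|\le L+1$ is in $\mathcal{E}$, and $I_{L+1}(G,P)=H_{L+1}(P)$ if and only if every $e\subseteq\mathrm{supp}(P)$ with $2\le|e|\le L+1$ is in $\mathcal{E}$; (iii) for every integer $n\ge2$ and all $\ell\in[L+1]$, $\theta^{(\ell)}_{L+1}(G^n,P^n)=n\,\theta^{(\ell)}_{L+1}(G,P)$, where $P^n(v^n)=\prod_{t\in[n]}P(v_t)$ (in particular $I_{L+1}(G^n,P^n)=nI_{L+1}(G,P)$).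
   Context: Notation: $[j]=\{1,\dots,j\}$, $[i:j]=\{i,\dots,j\}$; $\log$ is base 2. A hypergraph $G=(\mathcal{V},\mathcal{E})$ has a finite vertex set $\mathcal{V}$ and edge set $\mathcal{E}\subseteq 2^{\mathcal{V}}$ with every edge of cardinality at least 2. The $n$th co-normal power $G^n$ has vertex set $\mathcal{V}^n$, and a set $\{v_1^n,\dots,v_k^n\}\subseteq\mathcal{V}^n$ of $k\ge2$ distinct elements is an edge iff for some $t\in[n]$, $\{v_{1t},\dots,v_{kt}\}\in\mathcal{E}$. For $v_{[k]}=(v_1,\dots,v_k)\in\mathcal{V}^k$ let $\sigma(v_{[k]})=\{v_1,\dots,v_k\}$, and for $S\subseteq[k]$, $v_S=(v_j)_{j\in S}$, $P(v_S)=\prod_{j\in S}P(v_j)$. Define $I_{L+1}(G,P):=-\frac1L\log\sum_{v_{[L+1]}\in\mathcal{V}^{L+1}:\,\sigma(v_{[L+1]})\notin\mathcal{E}}P(v_{[L+1]})$, $\theta^{(L+1)}_{L+1}(G,P):=I_{L+1}(G,P)$, and for $\ell\in[L]$, $\theta^{(\ell)}_{L+1}(G,P):=2I_{L+1}(G,P)+\frac1L\log\sum_{v_{[\ell]}\in\mathcal{V}^{\ell}}P(v_{[\ell]})\Big[\sum_{v_{[\ell+1:L+1]}\in\mathcal{V}^{L+1-\ell}:\,\sigma(v_{[L+1]})\notin\mathcal{E}}P(v_{[\ell+1:L+1]})\Big]^2$. The Rényi entropy of order $\alpha\ge2$ (integer) is $H_\alpha(P)=-\frac{1}{\alpha-1}\log\sum_{v}P(v)^\alpha$.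 *)

(* Defs.v *)
From Stdlib Require Import Reals.
From mathcomp Require Import all_boot.
Delimit Scope R_scope with Re.
Set Implicit Arguments. Unset Strict Implicit. Unset Printing Implicit Defensive.

Definition log2 (x : R) : R := Rdiv (ln x) (ln 2%Re).

Section Defs.
Variable V : finType.

Definition is_hypergraph (E : {set {set V}}) : Prop :=
  forall e, e \in E -> 1 < #|e|.

Definition is_pmf (P : V -> R) : Prop :=
  (forall v, 0 <= P v)%Re /\ \big[Rplus/0%Re]_(v : V) P v = 1%Re.

Definition supp (P : V -> R) : {set V} := [set v | (if Rlt_dec 0 (P v) then true else false)].

Definition sigma k (f : {ffun 'I_k -> V}) : {set V} := [set f i | i : 'I_k].

Definition Ptup (P : V -> R) k (f : {ffun 'I_k -> V}) : R :=
  \big[Rmult/1%Re]_(i : 'I_k) P (f i).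

Definition I_L1 (E : {set {set V}}) (P : V -> R) (L : nat) : R :=
  (- / INR L * log2 (\big[Rplus/0%Re]_(f : {ffun 'I_L.+1 -> V} | sigma f \notin E)
                        Ptup P f))%Re.

(* theta^{(l)}_{L+1}(G,P) for l in [L]: the tuple v_[L+1] is the
   concatenation of the prefix a = v_[l] and the suffix b = v_[l+1:L+1]. *)
Definition theta_aux (E : {set {set V}}) (P : V -> R) (L l : nat) : R :=
  (2 * I_L1 E P L + / INR L *
     log2 (\big[Rplus/0%Re]_(a : {ffun 'I_l -> V})
             (Ptup P a *
              (\big[Rplus/0%Re]_(b : {ffun 'I_(L.+1 - l) -> V}
                                  | (sigma a :|: sigma b) \notin E) Ptup P b) ^ 2)))%Re.

Definition theta (E : {set {set V}}) (P : V -> R) (L l : nat) : R :=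
  if l == L.+1 then I_L1 E P L else theta_aux E P L l.

Definition renyi (P : V -> R) (alpha : nat) : R :=
  (- / INR (alpha - 1) * log2 (\big[Rplus/0%Re]_(v : V) P v ^ alpha))%Re.

Definition conormal_power (E : {set {set V}}) (n : nat)
  : {set {set {ffun 'I_n -> V}}} :=
  [set S : {set {ffun 'I_n -> V}} |
     (1 < #|S|) && [exists t : 'I_n, [set f t | f : {ffun 'I_n -> V} in S] \in E]].

Definition pow_pmf (P : V -> R) (n : nat) : {ffun 'I_n -> V} -> R :=
  fun f => Ptup P f.
End Defs.
Arguments pow_pmf {V} P n _.
Arguments conormal_power {V} E n.

(* Main.v *)
Require Import Defs.
From Stdlib Require Import Reals Lra.
From mathcomp Require Import all_boot.
From HB Require Import structures.

Lemma Rmult_0l : left_zero 0%Re Rmult. Proof. move=> x; exact: Rmult_0_l. Qed.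
Lemma Rmult_0r : right_zero 0%Re Rmult. Proof. move=> x; exact: Rmult_0_r. Qed.
HB.instance Definition _ := Monoid.isComLaw.Build R 0%Re Rplus (fun x y z => esym (Rplus_assoc x y z)) Rplus_comm Rplus_0_l.
HB.instance Definition _ := Monoid.isComLaw.Build R 1%Re Rmult (fun x y z => esym (Rmult_assoc x y z)) Rmult_comm Rmult_1_l.
HB.instance Definition _ := Monoid.isMulLaw.Build R 0%Re Rmult Rmult_0l Rmult_0r.
HB.instance Definition _ := Monoid.isAddLaw.Build R Rmult Rplus Rmult_plus_distr_r Rmult_plus_distr_l.
Local Notation sigma := Defs.sigma.
Set Implicit Arguments. Unset Strict Implicit. Unset Printing Implicit Defensive.

Lemma sum_ge0 (I : finType) (p : pred I) (F : I -> R) :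
  (forall i, p i -> 0 <= F i)%Re -> (0 <= \big[Rplus/0%Re]_(i | p i) F i)%Re.
Proof. move=> H; apply: (big_ind (fun x => 0 <= x)%Re) => //; [lra | move=> x y; lra]. Qed.

Lemma sum_le (I : finType) (p : pred I) (F G : I -> R) :
  (forall i, p i -> F i <= G i)%Re ->
  (\big[Rplus/0%Re]_(i | p i) F i <= \big[Rplus/0%Re]_(i | p i) G i)%Re.
Proof. move=> H; apply: (big_ind2 (fun x y => x <= y)%Re) => //; [lra | move=> *; lra]. Qed.

Lemma prod_ge0 (I : finType) (p : pred I) (F : I -> R) :
  (forall i, p i -> 0 <= F i)%Re -> (0 <= \big[Rmult/1%Re]_(i | p i) F i)%Re.
Proof. move=> H; apply: (big_ind (fun x => 0 <= x)%Re) => //; [lra | move=> x y; nra]. Qed.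

Lemma prod_gt0 (I : finType) (p : pred I) (F : I -> R) :
  (forall i, p i -> 0 < F i)%Re -> (0 < \big[Rmult/1%Re]_(i | p i) F i)%Re.
Proof. move=> H; apply: (big_ind (fun x => 0 < x)%Re) => //; [lra | move=> x y; nra]. Qed.

Lemma sum_ge_term (I : finType) (p : pred I) (F : I -> R) j :
  (forall i, p i -> 0 <= F i)%Re -> p j -> (F j <= \big[Rplus/0%Re]_(i | p i) F i)%Re.
Proof.
move=> H pj; rewrite (bigD1 j) //=.
have : (0 <= \big[Rplus/0%Re]_(i | p i && (i != j)) F i)%Re.
  by apply: sum_ge0 => i /andP[]; auto.
lra.
Qed.

Lemma sum_eq0_iff (I : finType) (p : pred I) (F : I -> R) :
  (forall i, p i -> 0 <= F i)%Re ->
  (\big[Rplus/0%Re]_(i | p i) F i = 0%Re <-> forall i, p i -> F i = 0%Re).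
Proof.
move=> H; split; last by move=> H0; apply: big1.
move=> Hs i pi; have := @sum_ge_term _ _ _ i H pi; have := H i pi; lra.
Qed.

Lemma in_supp (V : finType) (P : V -> R) v : v \in supp P <-> (0 < P v)%Re.
Proof. by rewrite /supp inE; case: Rlt_dec. Qed.

Lemma Ptup_ge0 (V : finType) (P : V -> R) k (f : {ffun 'I_k -> V}) :
  (forall v, 0 <= P v)%Re -> (0 <= Ptup P f)%Re.
Proof. by move=> H; apply: prod_ge0. Qed.

Lemma Ptup_gt0 (V : finType) (P : V -> R) k (f : {ffun 'I_k -> V}) :
  sigma f \subset supp P -> (0 < Ptup P f)%Re.
Proof.
move=> /subsetP H; apply: prod_gt0 => i _; apply/in_supp/H.
by apply/imsetP; exists i.
Qed.

Lemma Ptup_eq0 (V : finType) (P : V -> R) k (f : {ffun 'I_k -> V}) :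
  (forall v, 0 <= P v)%Re ->
  (Ptup P f = 0%Re <-> ~~ (sigma f \subset supp P)).
Proof.
move=> H0; split.
  move=> h; apply/negP => /Ptup_gt0; lra.
case/subsetPn => x /imsetP [i _ ->] hx.
have : ~ (0 < P (f i))%Re by move=> /in_supp; rewrite (negbTE hx).
move=> hn; have hz : P (f i) = 0%Re by have := H0 (f i); lra.
by rewrite /Ptup (bigD1 i) //= hz Rmult_0_l.
Qed.

Lemma sum_Ptup_all (V : finType) (P : V -> R) k :
  is_pmf P -> \big[Rplus/0%Re]_(f : {ffun 'I_k -> V}) Ptup P f = 1%Re.
Proof.
move=> [_ h1]; rewrite /Ptup -(bigA_distr_bigA (fun (i : 'I_k) v => P v)).
by apply: big1 => i _; rewrite h1.
Qed.

Lemma Ptup_const (V : finType) (P : V -> R) k v :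
  Ptup P [ffun _ : 'I_k => v] = (P v ^ k)%Re.
Proof.
rewrite /Ptup (eq_bigr (fun _ => P v)); last by move=> i _; rewrite ffunE.
rewrite big_const_ord; elim: k => //= k ->; done.
Qed.

Definition glue (V : finType) l k (a : {ffun 'I_l -> V}) (b : {ffun 'I_k -> V})
  : {ffun 'I_(l + k) -> V} :=
  [ffun i => match split i with inl j => a j | inr j => b j end].

Lemma glue_l (V : finType) l k (a : {ffun 'I_l -> V}) (b : {ffun 'I_k -> V}) j :
  glue a b (lshift k j) = a j.
Proof. by rewrite ffunE (unsplitK (inl j) : split (lshift k j) = inl j). Qed.

Lemma glue_r (V : finType) l k (a : {ffun 'I_l -> V}) (b : {ffun 'I_k -> V}) j :
  glue a b (rshift l j) = b j.
Proof. by rewrite ffunE (unsplitK (inr j) : split (rshift l j) = inr j). Qed.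

Lemma glue_Ptup (V : finType) (P : V -> R) l k (a : {ffun 'I_l -> V}) (b : {ffun 'I_k -> V}) :
  Ptup P (glue a b) = (Ptup P a * Ptup P b)%Re.
Proof.
rewrite /Ptup big_split_ord; congr Rmult; apply: eq_bigr => j _;
  by rewrite ?glue_l ?glue_r.
Qed.

Lemma glue_sigma (V : finType) l k (a : {ffun 'I_l -> V}) (b : {ffun 'I_k -> V}) :
  sigma (glue a b) = sigma a :|: sigma b.
Proof.
apply/setP => x; rewrite inE; apply/imsetP/orP.
  case=> i _ ->; rewrite ffunE; case: (split i) => j; [left|right];
    by apply/imsetP; exists j.
case=> /imsetP [j _ ->]; [exists (lshift k j) | exists (rshift l j)];
  by rewrite ?glue_l ?glue_r.
Qed.

Lemma split_sum (V : finType) l k (F : {ffun 'I_(l + k) -> V} -> R) :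
  \big[Rplus/0%Re]_(f : {ffun 'I_(l + k) -> V}) F f =
  \big[Rplus/0%Re]_(a : {ffun 'I_l -> V}) \big[Rplus/0%Re]_(b : {ffun 'I_k -> V})
     F (glue a b).
Proof.
rewrite pair_bigA (reindex (fun p : {ffun 'I_l -> V} * {ffun 'I_k -> V} => glue p.1 p.2)) //.
exists (fun f : {ffun 'I_(l + k) -> V} =>
          ([ffun j => f (lshift k j)], [ffun j => f (rshift l j)])).
  move=> [a b] _ /=; congr pair; apply/ffunP => j; by rewrite ffunE ?glue_l ?glue_r.
move=> f _; apply/ffunP => i; rewrite ffunE /=.
have := splitK i; case: (split i) => j /= <-; by rewrite ffunE.
Qed.

Definition Ssum (V : finType) (E : {set {set V}}) (P : V -> R) N :=
  \big[Rplus/0%Re]_(f : {ffun 'I_N -> V} | sigma f \notin E) Ptup P f.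

Definition gfun (V : finType) (E : {set {set V}}) (P : V -> R) l k (a : {ffun 'I_l -> V}) :=
  \big[Rplus/0%Re]_(b : {ffun 'I_k -> V} | (sigma a :|: sigma b) \notin E) Ptup P b.

Definition S2sum (V : finType) (E : {set {set V}}) (P : V -> R) l k :=
  \big[Rplus/0%Re]_(a : {ffun 'I_l -> V}) (Ptup P a * (gfun E P k a) ^ 2)%Re.

Lemma sub1_notin (V : finType) (E : {set {set V}}) (S : {set V}) v :
  is_hypergraph E -> S \subset [set v] -> S \notin E.
Proof.
move=> hE hS; apply/negP => /hE; have := subset_leq_card hS; rewrite cards1.
by move=> h1; rewrite ltnNge h1.
Qed.

Lemma sigma_const (V : finType) k (v : V) : sigma [ffun _ : 'I_k => v] \subset [set v].
Proof. by apply/subsetP => x /imsetP [i _ ->]; rewrite ffunE inE. Qed.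

Lemma exists_pos (V : finType) (P : V -> R) : is_pmf P -> exists v, (0 < P v)%Re.
Proof.
move=> [h0 h1]; case: (set_0Vmem (supp P)) => [hs | [v /in_supp hv]]; last by exists v.
have : (\big[Rplus/0%Re]_(v : V) P v <= \big[Rplus/0%Re]_(v : V) 0)%Re.
  apply: sum_le => v _; have : v \notin supp P by rewrite hs inE.
  move=> hn; have : ~ (0 < P v)%Re by move=> /in_supp; rewrite (negbTE hn).
  lra.
rewrite h1 big1 //; lra.
Qed.

Lemma Ssum_pos (V : finType) (E : {set {set V}}) (P : V -> R) N :
  is_hypergraph E -> is_pmf P -> (0 < Ssum E P N)%Re.
Proof.
move=> hE hP; have [v hv] := exists_pos hP.
have hc : sigma [ffun _ : 'I_N => v] \notin E by apply: sub1_notin (sigma_const _ _).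
apply: Rlt_le_trans (@sum_ge_term _ _ _ [ffun _ : 'I_N => v] _ hc).
  apply: Ptup_gt0; apply: subset_trans (sigma_const _ _) _.
  by rewrite sub1set; apply/in_supp.
by move=> f _; apply: Ptup_ge0; case: hP.
Qed.

Lemma Ssum_le1 (V : finType) (E : {set {set V}}) (P : V -> R) N :
  is_pmf P -> (Ssum E P N <= 1)%Re.
Proof.
move=> hP; rewrite -(sum_Ptup_all N hP) /Ssum big_mkcond /=.
apply: sum_le => f _; case: ifP => _; first lra.
by apply: Ptup_ge0; case: hP.
Qed.

Lemma gfun_bounds (V : finType) (E : {set {set V}}) (P : V -> R) l k (a : {ffun 'I_l -> V}) :
  is_pmf P -> (0 <= gfun E P k a <= 1)%Re.
Proof.
move=> hP; split.
  by apply: sum_ge0 => b _; apply: Ptup_ge0; case: hP.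
rewrite -(sum_Ptup_all k hP) /gfun big_mkcond /=.
apply: sum_le => f _; case: ifP => _; first lra.
by apply: Ptup_ge0; case: hP.
Qed.

Lemma Ssum_split (V : finType) (E : {set {set V}}) (P : V -> R) l k :
  Ssum E P (l + k) = \big[Rplus/0%Re]_(a : {ffun 'I_l -> V}) (Ptup P a * gfun E P k a)%Re.
Proof.
rewrite /Ssum big_mkcond split_sum; apply: eq_bigr => a _.
rewrite /gfun (@big_distrr R 0%Re Rmult Rplus) [in RHS]big_mkcond /=; apply: eq_bigr => b _.
rewrite glue_sigma glue_Ptup; case: ifP => _ //; lra.
Qed.

Lemma S2_pos (V : finType) (E : {set {set V}}) (P : V -> R) l k :
  is_hypergraph E -> is_pmf P -> (0 < S2sum E P l k)%Re.
Proof.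
move=> hE hP; have [v hv] := exists_pos hP.
have h0 := proj1 hP.
have hsv : [set v] \subset supp P by rewrite sub1set; apply/in_supp.
set a := [ffun _ : 'I_l => v]; set b := [ffun _ : 'I_k => v].
have hg : (0 < gfun E P k a)%Re.
  have hc : (sigma a :|: sigma b) \notin E.
    by apply: (sub1_notin (v := v)) => //; rewrite subUset !sigma_const.
  apply: Rlt_le_trans (@sum_ge_term _ _ _ b _ hc).
    by apply: Ptup_gt0; apply: subset_trans (sigma_const _ _) hsv.
  by move=> f _; apply: Ptup_ge0.
have hpa : (0 < Ptup P a)%Re by apply: Ptup_gt0; apply: subset_trans (sigma_const _ _) hsv.
apply: Rlt_le_trans (@sum_ge_term _ _ _ a _ isT).
  by apply: Rmult_lt_0_compat => //; apply: pow_lt.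
move=> f _; apply: Rmult_le_pos; [exact: Ptup_ge0 | apply: pow2_ge_0].
Qed.

Lemma S2_bounds (V : finType) (E : {set {set V}}) (P : V -> R) l k :
  is_pmf P ->
  ((Ssum E P (l + k)) ^ 2 <= S2sum E P l k /\ S2sum E P l k <= Ssum E P (l + k))%Re.
Proof.
move=> hP; have h0 := proj1 hP; rewrite Ssum_split /S2sum.
set S := \big[Rplus/0%Re]_(a : {ffun 'I_l -> V}) (Ptup P a * gfun E P k a)%Re.
have hSd : S = \big[Rplus/0%Re]_(a : {ffun 'I_l -> V}) (Ptup P a * gfun E P k a)%Re by [].
clearbody S.
split; last first.
  rewrite hSd; apply: sum_le => a _; have := gfun_bounds E k a hP; have := Ptup_ge0 a h0.
  move=> h1 [h2 h3]; apply: Rmult_le_compat_l => //; rewrite /= Rmult_1_r; nra.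
have hw := sum_Ptup_all l hP.
have hnn : (0 <= \big[Rplus/0%Re]_(a : {ffun 'I_l -> V})
               (Ptup P a * (gfun E P k a - S) ^ 2))%Re.
  apply: sum_ge0 => a _; apply: Rmult_le_pos; [exact: Ptup_ge0 | apply: pow2_ge_0].
have he : \big[Rplus/0%Re]_(a : {ffun 'I_l -> V}) (Ptup P a * (gfun E P k a - S) ^ 2)%Re
  = (\big[Rplus/0%Re]_(a : {ffun 'I_l -> V}) (Ptup P a * gfun E P k a ^ 2)
     + (-2 * S) * \big[Rplus/0%Re]_(a : {ffun 'I_l -> V}) (Ptup P a * gfun E P k a) + S ^ 2 * \big[Rplus/0%Re]_(a : {ffun 'I_l -> V}) Ptup P a)%Re.
  rewrite !(@big_distrr R 0%Re Rmult Rplus) -!big_split /=; apply: eq_bigr => a _; ring.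
rewrite hw -hSd in he; simpl in *; nra.
Qed.

Lemma ln2_pos : (0 < ln 2)%Re.
Proof. rewrite -ln_1; apply: ln_increasing; lra. Qed.

Lemma log2_le x y : (0 < x)%Re -> (x <= y)%Re -> (log2 x <= log2 y)%Re.
Proof.
move=> hx hxy; rewrite /log2 /Rdiv; apply: Rmult_le_compat_r.
  by apply/Rlt_le/Rinv_0_lt_compat/ln2_pos.
case: (Rle_lt_or_eq_dec _ _ hxy) => [h|->]; last lra.
by apply/Rlt_le/ln_increasing.
Qed.

Lemma log2_pow x n : (0 < x)%Re -> log2 (x ^ n) = (INR n * log2 x)%Re.
Proof. by move=> hx; rewrite /log2 ln_pow //; rewrite /Rdiv Rmult_assoc. Qed.

Lemma log2_1 : log2 1 = 0%Re.
Proof. by rewrite /log2 ln_1 /Rdiv Rmult_0_l. Qed.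

Lemma log2_le0 x : (0 < x)%Re -> (x <= 1)%Re -> (log2 x <= 0)%Re.
Proof. by move=> hx h1; rewrite -log2_1; apply: log2_le. Qed.

Lemma log2_inj x y : (0 < x)%Re -> (0 < y)%Re -> log2 x = log2 y -> x = y.
Proof.
move=> hx hy; rewrite /log2 /Rdiv => h.
have h2 := ln2_pos.
apply: ln_inv => //; apply: (Rmult_eq_reg_r (/ ln 2)) => //.
by apply/Rgt_not_eq/Rinv_0_lt_compat.
Qed.

Lemma INR_inv_pos L : 1 <= L -> (0 < / INR L)%Re.
Proof. by move=> hL; apply/Rinv_0_lt_compat/lt_0_INR; apply/ltP. Qed.

Lemma I_L1E (V : finType) (E : {set {set V}}) (P : V -> R) L :
  I_L1 E P L = (- / INR L * log2 (Ssum E P L.+1))%Re.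
Proof. by []. Qed.

Lemma theta_auxE (V : finType) (E : {set {set V}}) (P : V -> R) L l :
  theta_aux E P L l = (2 * I_L1 E P L + / INR L * log2 (S2sum E P l (L.+1 - l)))%Re.
Proof. by []. Qed.

Lemma part_i (V : finType) (E : {set {set V}}) (P : V -> R) L
  (hE : is_hypergraph E) (hP : is_pmf P) (hL : 1 <= L) l :
  1 <= l <= L.+1 -> (0 <= theta E P L l /\ theta E P L l <= I_L1 E P L)%Re.
Proof.
move=> /andP [hl1 hl2].
have hc := INR_inv_pos hL.
have hS := @Ssum_pos _ E P L.+1 hE hP.
have hS1 := @Ssum_le1 _ E P L.+1 hP.
have hs0 := log2_le0 hS hS1.
rewrite /theta; case: eqP => [_ | hne].
  split; last lra.
  rewrite I_L1E; set s := log2 _ in hs0 *; nra.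
rewrite theta_auxE I_L1E.
have [hb1 hb2] := @S2_bounds _ E P l (L.+1 - l) hP.
rewrite subnKC // in hb1 hb2.
have hS2 := @S2_pos _ E P l (L.+1 - l) hE hP.
have ht1 := log2_le hS2 hb2.
have ht2 := log2_le (pow_lt _ 2 hS) hb1.
rewrite log2_pow // in ht2.
move: ht1 ht2; set s := log2 (Ssum E P L.+1); set t := log2 _.
rewrite /= => ht1 ht2; split; nra.
Qed.

Lemma small_notin (V : finType) (E : {set {set V}}) (S : {set V}) :
  is_hypergraph E -> #|S| <= 1 -> S \notin E.
Proof. by move=> hE h1; apply/negP => /hE; rewrite ltnNge h1. Qed.

Lemma card_sigma (V : finType) N (f : {ffun 'I_N -> V}) : #|sigma f| <= N.
Proof. by rewrite /sigma; apply: leq_trans (leq_imset_card _ _) _; rewrite card_ord. Qed.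

Lemma tuples_vs_sets (V : finType) (P : V -> R) N (Rp : {set V} -> Prop) :
  (forall f : {ffun 'I_N -> V}, sigma f \subset supp P -> 1 < #|sigma f| -> Rp (sigma f)) <->
  (forall e : {set V}, e \subset supp P -> 2 <= #|e| <= N -> Rp e).
Proof.
split; last first.
  by move=> H f hs h1; apply: H => //; rewrite h1 card_sigma.
move=> H e hs /andP [h2 hN].
have he0 : 0 < #|e| by apply: leq_trans h2.
have [x0 hx0] : exists x0, x0 \in e by apply/card_gt0P.
pose f := [ffun i : 'I_N => nth x0 (enum e) (i %% #|e|)].
have hf : sigma f = e.
  apply/setP => x; apply/imsetP/idP.
    case=> i _ ->; rewrite ffunE -mem_enum; apply: mem_nth.
    by rewrite -cardE ltn_pmod.
  move=> hx; have hj : index x (enum e) < N.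
    by apply: leq_trans hN; rewrite cardE index_mem mem_enum.
  exists (Ordinal hj) => //; rewrite ffunE /= modn_small ?nth_index ?mem_enum //.
  by rewrite cardE index_mem mem_enum.
have := H f; rewrite hf; apply => //; rewrite hf.
Qed.

Definition Tsum (V : finType) (E : {set {set V}}) (P : V -> R) N :=
  \big[Rplus/0%Re]_(f : {ffun 'I_N -> V} | (sigma f \notin E) && (1 < #|sigma f|)) Ptup P f.

Lemma const_sum (V : finType) N (F : {ffun 'I_N.+1 -> V} -> R) :
  \big[Rplus/0%Re]_(f : {ffun 'I_N.+1 -> V} | #|sigma f| <= 1) F f =
  \big[Rplus/0%Re]_(v : V) F [ffun _ => v].
Proof.
rewrite (partition_big (fun f : {ffun 'I_N.+1 -> V} => f ord0) predT) //.
apply: eq_bigr => v _; apply: big_pred1 => f /=.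
apply/andP/eqP.
  case=> h1 /eqP h0; apply/ffunP => i; rewrite ffunE -h0.
  have hA : f ord0 \in sigma f by apply/imsetP; exists ord0.
  have := (card_le1P h1) _ hA (f i).
  have -> : f i \in sigma f by apply/imsetP; exists i.
  by move/esym => /eqP.
move=> ->; split; last by rewrite ffunE.
by apply: leq_trans (subset_leq_card (sigma_const _ v)) _; rewrite cards1.
Qed.

Lemma Ssum_decomp (V : finType) (E : {set {set V}}) (P : V -> R) L :
  is_hypergraph E ->
  Ssum E P L.+1 = (\big[Rplus/0%Re]_(v : V) P v ^ L.+1 + Tsum E P L.+1)%Re.
Proof.
move=> hE; rewrite /Ssum (bigID (fun f : {ffun 'I_L.+1 -> V} => #|sigma f| <= 1)) /=.
congr Rplus.
  rewrite (eq_bigl (fun f : {ffun 'I_L.+1 -> V} => #|sigma f| <= 1)); last first.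
    by move=> f; case h: (_ <= 1); rewrite ?andbT ?andbF // small_notin.
  by rewrite const_sum; apply: eq_bigr => v _; rewrite Ptup_const.
by apply: eq_bigl => f; rewrite ltnNge.
Qed.

Lemma renyiE (V : finType) (P : V -> R) L :
  renyi P L.+1 = (- / INR L * log2 (\big[Rplus/0%Re]_(v : V) P v ^ L.+1))%Re.
Proof. by rewrite /renyi subn1. Qed.

Lemma C_pos (V : finType) (P : V -> R) L :
  is_pmf P -> (0 < \big[Rplus/0%Re]_(v : V) P v ^ L.+1)%Re.
Proof.
move=> hP; have [v hv] := exists_pos hP.
apply: Rlt_le_trans (@sum_ge_term _ _ _ v _ isT); first exact: pow_lt.
move=> w _; apply: pow_le; exact: (proj1 hP).
Qed.

Lemma total_split (V : finType) (E : {set {set V}}) (P : V -> R) N :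
  is_pmf P ->
  (Ssum E P N + \big[Rplus/0%Re]_(f : {ffun 'I_N -> V} | sigma f \in E) Ptup P f)%Re = 1%Re.
Proof.
move=> hP; rewrite -(sum_Ptup_all N hP) [RHS](bigID (fun f : {ffun 'I_N -> V} => sigma f \notin E)) /=.
by congr Rplus; apply: eq_bigl => f; rewrite negbK.
Qed.

Lemma log_scale_iff (c x y : R) : (0 < c)%Re -> (0 < x)%Re -> (0 < y)%Re ->
  ((- c * log2 x)%Re = (- c * log2 y)%Re <-> x = y).
Proof.
move=> hc hx hy; split; last by move=> ->.
move=> h; apply: log2_inj => //.
apply: (Rmult_eq_reg_l (- c)) => //; lra.
Qed.

Lemma part_ii (V : finType) (E : {set {set V}}) (P : V -> R) L
  (hE : is_hypergraph E) (hP : is_pmf P) (hL : 1 <= L) :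
  ((0 <= I_L1 E P L /\ I_L1 E P L <= renyi P L.+1)%Re /\
   (I_L1 E P L = 0%Re <->
      forall e : {set V}, e \subset supp P -> 2 <= #|e| <= L.+1 -> e \notin E) /\
   (I_L1 E P L = renyi P L.+1 <->
      forall e : {set V}, e \subset supp P -> 2 <= #|e| <= L.+1 -> e \in E)).
Proof.
have hc := INR_inv_pos hL.
have hS := @Ssum_pos _ E P L.+1 hE hP.
have hS1 := @Ssum_le1 _ E P L.+1 hP.
have hs0 := log2_le0 hS hS1.
have hC := @C_pos _ P L hP.
have h0 := proj1 hP.
have hT : (0 <= Tsum E P L.+1)%Re by apply: sum_ge0 => f _; apply: Ptup_ge0.
have hdec := @Ssum_decomp _ E P L hE.
rewrite renyiE I_L1E.
split.
  split; first by set s := log2 _ in hs0 *; nra.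
  apply: Rmult_le_compat_neg_l; first lra.
  apply: log2_le => //; lra.
split.
  have -> : (- / INR L * log2 (Ssum E P L.+1))%Re = 0%Re <->
     \big[Rplus/0%Re]_(f : {ffun 'I_L.+1 -> V} | sigma f \in E) Ptup P f = 0%Re.
    have ht := @total_split _ E P L.+1 hP.
    split => h.
      have h1 : Ssum E P L.+1 = 1%Re.
        apply: log2_inj => //; first lra.
        rewrite log2_1; case: (Rmult_integral _ _ h) => //; lra.
      lra.
    have -> : Ssum E P L.+1 = 1%Re by lra.
    rewrite log2_1; ring.
  apply: (iff_trans (sum_eq0_iff _)); first by move=> f _; apply: Ptup_ge0.
  apply: (iff_trans _ (tuples_vs_sets P L.+1 (fun e => e \notin E))).
  split.
    move=> H f hs _; apply/negP => /H /Ptup_eq0 => /(_ h0); by rewrite hs.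
  move=> H f hf; apply/Ptup_eq0 => //; apply/negP => hs.
  case: (leqP #|sigma f| 1) => h1.
    by move: hf; rewrite (negbTE (small_notin hE h1)).
  by move: hf; rewrite (negbTE (H f hs h1)).
have -> : (- / INR L * log2 (Ssum E P L.+1))%Re =
          (- / INR L * log2 (\big[Rplus/0%Re]_(v : V) P v ^ L.+1))%Re <->
          Tsum E P L.+1 = 0%Re.
  rewrite log_scale_iff //; lra.
rewrite /Tsum; apply: (iff_trans (sum_eq0_iff _)); first by move=> f _; apply: Ptup_ge0.
apply: (iff_trans _ (tuples_vs_sets P L.+1 (fun e => e \in E))).
split.
  move=> H f hs h1; apply/negPn/negP => hn.
  have := H f; rewrite hn h1 => /(_ isT) /Ptup_eq0 => /(_ h0); by rewrite hs.
move=> H f /andP [hn h1]; apply/Ptup_eq0 => //; apply/negP => hs.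
by move: hn; rewrite H.
Qed.

Definition col (V : finType) k n (f : {ffun 'I_k -> {ffun 'I_n -> V}}) (t : 'I_n)
  : {ffun 'I_k -> V} := [ffun i => f i t].

Lemma notin_power (V : finType) (E : {set {set V}}) n (S : {set {ffun 'I_n -> V}}) :
  is_hypergraph E ->
  (S \notin conormal_power E n) = [forall t, [set f t | f : {ffun 'I_n -> V} in S] \notin E].
Proof.
move=> hE; rewrite /conormal_power inE negb_and negb_exists.
case h: (1 < #|S|) => //=; symmetry; apply/forallP => t.
apply: small_notin hE _; apply: leq_trans (leq_imset_card _ _) _.
by rewrite leqNgt h.
Qed.

Lemma proj_sigma (V : finType) k n (f : {ffun 'I_k -> {ffun 'I_n -> V}}) t :
  [set g t | g : {ffun 'I_n -> V} in sigma f] = sigma (col f t).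
Proof.
apply/setP => x; apply/imsetP/imsetP.
  by case=> g /imsetP [i _ ->] ->; exists i => //; rewrite ffunE.
by case=> i _ ->; exists (f i); [apply/imsetP; exists i | rewrite ffunE].
Qed.

Lemma Ptup_pow (V : finType) (P : V -> R) k n (f : {ffun 'I_k -> {ffun 'I_n -> V}}) :
  Ptup (pow_pmf P n) f = \big[Rmult/1%Re]_(t : 'I_n) Ptup P (col f t).
Proof.
rewrite /Ptup /pow_pmf exchange_big /=; apply: eq_bigr => t _.
by apply: eq_bigr => i _; rewrite ffunE.
Qed.

Lemma fact_sum (V : finType) k n (phi : 'I_n -> {ffun 'I_k -> V} -> R) :
  \big[Rplus/0%Re]_(f : {ffun 'I_k -> {ffun 'I_n -> V}}) \big[Rmult/1%Re]_(t : 'I_n) phi t (col f t)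
  = \big[Rmult/1%Re]_(t : 'I_n) \big[Rplus/0%Re]_(g : {ffun 'I_k -> V}) phi t g.
Proof.
rewrite (bigA_distr_bigA phi).
rewrite (reindex (fun h : {ffun 'I_n -> {ffun 'I_k -> V}} => [ffun i => [ffun t => h t i]])).
  apply: eq_bigr => h _; apply: eq_bigr => t _; congr phi.
  by apply/ffunP => i; rewrite !ffunE.
exists (fun f : {ffun 'I_k -> {ffun 'I_n -> V}} => [ffun t => [ffun i => f i t]]).
  by move=> h _; apply/ffunP => t; apply/ffunP => i; rewrite !ffunE.
by move=> f _; apply/ffunP => i; apply/ffunP => t; rewrite !ffunE.
Qed.

Lemma prod_if (I : finType) (b : I -> bool) (x : I -> R) :
  \big[Rmult/1%Re]_(t : I) (if b t then x t else 0%Re) =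
  if [forall t, b t] then \big[Rmult/1%Re]_(t : I) x t else 0%Re.
Proof.
case: (boolP [forall t, b t]) => h.
  by apply: eq_bigr => t _; move/forallP: h => ->.
move/forallPn: h => [t /negbTE ht]; rewrite (bigD1 t) //= ht; exact: Rmult_0_l.
Qed.

Lemma prod_const_pow n (x : R) : \big[Rmult/1%Re]_(t < n) x = (x ^ n)%Re.
Proof. by rewrite big_const_ord; elim: n => //= n ->. Qed.

Lemma Ssum_power (V : finType) (E : {set {set V}}) (P : V -> R) N n :
  is_hypergraph E ->
  Ssum (conormal_power E n) (pow_pmf P n) N = (Ssum E P N ^ n)%Re.
Proof.
move=> hE; rewrite /Ssum -prod_const_pow.
under [RHS]eq_bigr do rewrite big_mkcond.
rewrite -fact_sum [LHS]big_mkcond /=.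
apply: eq_bigr => f _; rewrite prod_if notin_power //.
have -> : [forall t, [set g t | g : {ffun 'I_n -> V} in sigma f] \notin E] = [forall t, sigma (col f t) \notin E].
  by apply: eq_forallb => t; rewrite proj_sigma.
by case: ifP => _ //; rewrite Ptup_pow.
Qed.

Lemma gfun_power (V : finType) (E : {set {set V}}) (P : V -> R) l k n
  (a : {ffun 'I_l -> {ffun 'I_n -> V}}) :
  is_hypergraph E ->
  gfun (conormal_power E n) (pow_pmf P n) k a =
  \big[Rmult/1%Re]_(t : 'I_n) gfun E P k (col a t).
Proof.
move=> hE; rewrite /gfun.
under [RHS]eq_bigr do rewrite big_mkcond.
rewrite -fact_sum [LHS]big_mkcond /=.
apply: eq_bigr => f _; rewrite prod_if notin_power //.
have -> : [forall t, [set g t | g : {ffun 'I_n -> V} in sigma a :|: sigma f] \notin E] =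
          [forall t, (sigma (col a t) :|: sigma (col f t)) \notin E].
  by apply: eq_forallb => t; rewrite imsetU !proj_sigma.
by case: ifP => _ //; rewrite Ptup_pow.
Qed.

Lemma S2_power (V : finType) (E : {set {set V}}) (P : V -> R) l k n :
  is_hypergraph E ->
  S2sum (conormal_power E n) (pow_pmf P n) l k = (S2sum E P l k ^ n)%Re.
Proof.
move=> hE; rewrite /S2sum -prod_const_pow -fact_sum.
apply: eq_bigr => a _; rewrite gfun_power // Ptup_pow /= !Rmult_1_r -!big_split /=.
by apply: eq_bigr => t _; rewrite Rmult_1_r.
Qed.

Lemma part_iii (V : finType) (E : {set {set V}}) (P : V -> R) L
  (hE : is_hypergraph E) (hP : is_pmf P) n l :
  theta (conormal_power E n) (pow_pmf P n) L l = (INR n * theta E P L l)%Re.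
Proof.
have hS := @Ssum_pos _ E P L.+1 hE hP.
rewrite /theta; case: eqP => _.
  by rewrite !I_L1E Ssum_power // log2_pow //; ring.
have hS2 := @S2_pos _ E P l (L.+1 - l) hE hP.
rewrite !theta_auxE !I_L1E Ssum_power // S2_power // !log2_pow //; ring.
Qed.

Theorem proposition3 (V : finType) (E : {set {set V}}) (P : V -> R) (L : nat)
  (hE : is_hypergraph E) (hP : is_pmf P) (hL : 1 <= L) :
  (* (i) *)
  (forall l : nat, 1 <= l <= L.+1 ->
     (0 <= theta E P L l /\ theta E P L l <= I_L1 E P L)%Re) /\
  (* (ii) *)
  ((0 <= I_L1 E P L /\ I_L1 E P L <= renyi P L.+1)%Re /\
   (I_L1 E P L = 0%Re <->
      forall e : {set V}, e \subset supp P -> 2 <= #|e| <= L.+1 -> e \notin E) /\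
   (I_L1 E P L = renyi P L.+1 <->
      forall e : {set V}, e \subset supp P -> 2 <= #|e| <= L.+1 -> e \in E)) /\
  (* (iii) *)
  (forall n : nat, 2 <= n -> forall l : nat, 1 <= l <= L.+1 ->
     theta (conormal_power E n) (pow_pmf P n) L l = (INR n * theta E P L l)%Re).
Proof.
split; first exact: part_i.
split; first exact: part_ii.
by move=> n _ l _; apply: part_iii.
Qed.
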